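(* Let $g$ be the Lorentzian form on $\mathbb{R}^4$ with matrix $\mathrm{diag}(1,1,1,-c^2)$. For a timelike vector $u$ let $R_u$ be the equivalence relation on $\mathbb{R}^4$ defined by $x\,R_u\,y\iff g(x-y,u)=0$. If $u_1,u_2$ are non-proportional future timelike vectors, then the smallest equivalence relation containing $R_{u_1}\cup R_{u_2}$ is the total relation $\mathbb{R}^4\times\mathbb{R}^4$.
   Context: A vector $u$ is timelike if $g(u,u)<0$, and future timelike if moreover its fourth component is positive. *)

(* Defs.v *)
From HB Require Import structures.
From mathcomp Require Import all_boot all_order all_algebra.
From mathcomp Require Import reals.
From Stdlib Require Import Relations.Relation_Operators.
Set Implicit Arguments. Unset Strict Implicit. Unset Printing Implicit Defensive.
Import Order.TTheory GRing.Theory Num.Theory.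
Local Open Scope ring_scope.

(* Vectors of R^4 are row vectors 'rV[R]_4; components indexed 0..3, the
   "fourth component" is index 3 (the time coordinate). *)

Definition lorentz (R : realFieldType) (c : R) (x y : 'rV[R]_4) : R :=
  x 0 0 * y 0 0 + x 0 1 * y 0 1 + x 0 2 * y 0 2 - c ^+ 2 * (x 0 3 * y 0 3).

Definition timelike (R : realFieldType) (c : R) (u : 'rV[R]_4) : Prop :=
  lorentz c u u < 0.

Definition future_timelike (R : realFieldType) (c : R) (u : 'rV[R]_4) : Prop :=
  timelike c u /\ 0 < u 0 3.

Definition Rel_u (R : realFieldType) (c : R) (u : 'rV[R]_4) (x y : 'rV[R]_4)
  : Prop := lorentz c (x - y) u = 0.

Definition proportional (R : realFieldType) (u1 u2 : 'rV[R]_4) : Prop :=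
  exists a : R, u1 = a *: u2 \/ u2 = a *: u1.

Definition rel_union (T : Type) (r1 r2 : T -> T -> Prop) : T -> T -> Prop :=
  fun x y => r1 x y \/ r2 x y.

Definition equiv_closure (T : Type) (r : T -> T -> Prop) : T -> T -> Prop :=
  clos_refl_sym_trans T r.

(* Main.v *)
Require Import Defs.
From HB Require Import structures.
From mathcomp Require Import all_boot all_order all_algebra.
From mathcomp Require Import reals.
From mathcomp Require Import ring lra.
From Stdlib Require Import Relations.Relation_Operators Classical.
Set Implicit Arguments. Unset Strict Implicit. Unset Printing Implicit Defensive.
Import Order.TTheory GRing.Theory Num.Theory.
Local Open Scope ring_scope.

Lemma lorentzB (R : realFieldType) (c : R) (x y u : 'rV[R]_4) :
  lorentz c (x - y) u = lorentz c x u - lorentz c y u.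
Proof. rewrite /lorentz !mxE; ring. Qed.

Lemma lorentzDZ (R : realFieldType) (c t : R) (x v u : 'rV[R]_4) :
  lorentz c (x + t *: v) u = lorentz c x u + t * lorentz c v u.
Proof. rewrite /lorentz !mxE; ring. Qed.

Lemma key (R : realFieldType) (c : R) (u1 u2 v : 'rV[R]_4) :
  lorentz c v u1 = 0 -> lorentz c v u2 != 0 ->
  forall x y : 'rV[R]_4, equiv_closure (rel_union (Rel_u c u1) (Rel_u c u2)) x y.
Proof.
move=> h1 h2 x y.
pose t := (lorentz c y u2 - lorentz c x u2) / lorentz c v u2.
apply: (rst_trans _ _ _ (x + t *: v)).
  apply: rst_step; left; rewrite /Rel_u lorentzB lorentzDZ h1; ring.
apply: rst_step; right; rewrite /Rel_u lorentzB lorentzDZ /t.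
by field.
Qed.

Definition vi (R : realFieldType) (c : R) (u1 : 'rV[R]_4) (i : 'I_4) : 'rV[R]_4 :=
  \row_k [:: (c^+2 * u1 0 3) * (i == 0 :> nat)%:R;
             (c^+2 * u1 0 3) * (i == 1 :> nat)%:R;
             (c^+2 * u1 0 3) * (i == 2 :> nat)%:R;
             u1 0 i]`_k.

Theorem proposition3p10 (R : realType) (c : R) (hc : 0 < c)
  (u1 u2 : 'rV[R]_4) :
  future_timelike c u1 -> future_timelike c u2 -> ~ proportional u1 u2 ->
  forall x y : 'rV[R]_4, equiv_closure (rel_union (Rel_u c u1) (Rel_u c u2)) x y.
Proof.
move=> [_ ha3] _ np.
have c2 : c ^+ 2 != 0 by rewrite expf_neq0 // gt_eqF.
have a3 : u1 0 3 != 0 by rewrite gt_eqF.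
have f1 : forall i : 'I_4, (i < 3)%N -> lorentz c (vi c u1 i) u1 = 0.
  move=> [[|[|[|[|i]]]] Hi] //= _; rewrite /lorentz /vi !mxE /=.
  - by rewrite (_ : Ordinal Hi = 0); [ring | exact: val_inj].
  - by rewrite (_ : Ordinal Hi = 1); [ring | exact: val_inj].
  - by rewrite (_ : Ordinal Hi = 2); [ring | exact: val_inj].
have f2 : forall i : 'I_4, (i < 3)%N ->
    lorentz c (vi c u1 i) u2 = c^+2 * (u1 0 3 * u2 0 i - u1 0 i * u2 0 3).
  move=> [[|[|[|[|i]]]] Hi] //= _; rewrite /lorentz /vi !mxE /=.
  - by rewrite (_ : Ordinal Hi = 0); [ring | exact: val_inj].
  - by rewrite (_ : Ordinal Hi = 1); [ring | exact: val_inj].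
  - by rewrite (_ : Ordinal Hi = 2); [ring | exact: val_inj].
have [i [Hi Hne]] : exists i : 'I_4, (i < 3)%N /\
    u1 0 3 * u2 0 i - u1 0 i * u2 0 3 != 0.
  apply: NNPP => hn; apply: np; exists (u2 0 3 / u1 0 3); right.
  apply/rowP => k; rewrite !mxE.
  have E : forall j : 'I_4, (j < 3)%N -> u1 0 3 * u2 0 j - u1 0 j * u2 0 3 = 0.
    move=> j hj; apply: NNPP => hj'; apply: hn; exists j; split => //.
    exact/eqP.
  case: k => [[|[|[|[|k]]]] Hk] //.
  - have := E 0 isT; rewrite (_ : Ordinal Hk = 0); last exact: val_inj.
    move=> e; apply: (mulfI a3); rewrite mulrA mulrCA mulfV // ; lra.
  - have := E 1 isT; rewrite (_ : Ordinal Hk = 1); last exact: val_inj.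
    move=> e; apply: (mulfI a3); rewrite mulrA mulrCA mulfV // ; lra.
  - have := E 2 isT; rewrite (_ : Ordinal Hk = 2); last exact: val_inj.
    move=> e; apply: (mulfI a3); rewrite mulrA mulrCA mulfV // ; lra.
  - rewrite (_ : Ordinal Hk = 3); last exact: val_inj.
    by rewrite divfK.
apply: (key (v := vi c u1 i)); first exact: f1.
by rewrite f2 // mulf_neq0.
Qed.
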